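(* Let $\mathbb{S}=[0,1]$ with $0$ and $1$ identified, and let $H:\mathbb{S}\times\mathbb{R}\times\mathbb{R}\to\mathbb{R}$ be $C^\infty$ with $\frac{\partial^2H}{\partial p^2}>0$, $p\mapsto H(x,p,u)$ superlinear for each $(x,u)$, and $|\frac{\partial H}{\partial u}|\le\kappa$ for some $\kappa>0$. Let $u_0$ be a viscosity solution of $H(x,u'(x),u(x))=0$ on $\mathbb{S}$ such that $\frac{\partial H}{\partial p}(x,u_0'(x),u_0(x))\ne0$ at every differentiability point $x$ of $u_0$. Set $B(x)=\frac{\partial H}{\partial p}(x,u_0'(x),u_0(x))$, $$\mu=\frac{\int_0^1\frac{\partial H}{\partial u}(\tau,u_0'(\tau),u_0(\tau))B(\tau)^{-1}d\tau}{\int_0^1B(\tau)^{-1}d\tau},\qquad \rho(x)=\exp\left\{\int_0^x\frac{\mu-\frac{\partial H}{\partial u}(\tau,u_0'(\tau),u_0(\tau))}{B(\tau)}\,d\tau\right\}.$$ Assume $\mu>0$. For given $\Theta\in(\mu,+\infty)$ set $w_\epsilon(x,t)=u_0(x)-\epsilon\rho(x)e^{-\Theta t}$. Then there exists $\tilde\epsilon_0=\tilde\epsilon_0(\Theta)>0$ such that: (1) for $\epsilon\in(0,\tilde\epsilon_0]$, $\partial_tw_\epsilon(x,t)+H(x,\partial_xw_\epsilon(x,t),w_\epsilon(x,t))\ge0$ for all $(x,t)\in\mathbb{S}\times[0,+\infty)$; (2) for $\epsilon\in[-\tilde\epsilon_0,0)$, $\partial_tw_\epsilon(x,t)+H(x,\partial_xw_\epsilon(x,t),w_\epsilon(x,t))\le0$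 for all $(x,t)\in\mathbb{S}\times[0,+\infty)$.
   Context: It is known that under these assumptions $u_0$ is of class $C^\infty$, so $B$ is smooth and nowhere zero, $\rho$ is a smooth positive function on $\mathbb{S}$, and $w_\epsilon$ is $C^\infty$. *)

(* Defs.v *)
From Stdlib Require Import Reals List.
From Coquelicot Require Import Coquelicot.
Open Scope R_scope.

(* The circle S = [0,1] with 0 ~ 1 is represented by 1-periodic lifts to R. *)
Definition periodic1 (f : R -> R) : Prop := forall x, f (x + 1) = f x.

Definition Dx (f : R -> R -> R -> R) : R -> R -> R -> R :=
  fun x p u => Derive (fun y => f y p u) x.
Definition Dp (f : R -> R -> R -> R) : R -> R -> R -> R :=
  fun x p u => Derive (fun y => f x y u) p.
Definition Du (f : R -> R -> R -> R) : R -> R -> R -> R :=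
  fun x p u => Derive (fun y => f x p y) u.

Definition Dir (i : nat) : (R -> R -> R -> R) -> (R -> R -> R -> R) :=
  match i with O => Dx | 1%nat => Dp | _ => Du end.

Fixpoint pder (l : list nat) (f : R -> R -> R -> R) : R -> R -> R -> R :=
  match l with nil => f | i :: l' => Dir i (pder l' f) end.

Definition smooth3 (f : R -> R -> R -> R) : Prop :=
  forall l : list nat,
    (forall x p u,
        ex_derive (fun y => pder l f y p u) x /\
        ex_derive (fun y => pder l f x y u) p /\
        ex_derive (fun y => pder l f x p y) u) /\
    (forall x p u,
        continuous (fun z : R * R * R => pder l f (fst (fst z)) (snd (fst z)) (snd z))
                   (x, p, u)).

Definition smooth1 (f : R -> R) : Prop :=
  forall (n : nat) (x : R), ex_derive (Derive_n f n) x.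

Definition C1 (phi : R -> R) : Prop :=
  (forall x, ex_derive phi x) /\ (forall x, continuous (Derive phi) x).

Definition loc_max (g : R -> R) (x : R) : Prop :=
  exists d, 0 < d /\ forall y, Rabs (y - x) < d -> g y <= g x.
Definition loc_min (g : R -> R) (x : R) : Prop :=
  exists d, 0 < d /\ forall y, Rabs (y - x) < d -> g x <= g y.

Definition viscosity_solution (H : R -> R -> R -> R) (u : R -> R) : Prop :=
  periodic1 u /\ (forall x, continuous u x) /\
  (forall phi x, C1 phi -> loc_max (fun y => u y - phi y) x ->
       H x (Derive phi x) (u x) <= 0) /\
  (forall phi x, C1 phi -> loc_min (fun y => u y - phi y) x ->
       H x (Derive phi x) (u x) >= 0).

Definition superlinear_p (H : R -> R -> R -> R) : Prop :=
  forall x u M : R, exists R0 : R, forall p : R,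
    R0 <= Rabs p -> M * Rabs p <= H x p u.

Definition Bfun (H : R -> R -> R -> R) (u0 : R -> R) (x : R) : R :=
  Dp H x (Derive u0 x) (u0 x).
Definition Hufun (H : R -> R -> R -> R) (u0 : R -> R) (x : R) : R :=
  Du H x (Derive u0 x) (u0 x).

Definition mu (H : R -> R -> R -> R) (u0 : R -> R) : R :=
  RInt (fun t => Hufun H u0 t / Bfun H u0 t) 0 1 /
  RInt (fun t => / Bfun H u0 t) 0 1.

Definition rho (H : R -> R -> R -> R) (u0 : R -> R) (x : R) : R :=
  exp (RInt (fun t => (mu H u0 - Hufun H u0 t) / Bfun H u0 t) 0 x).

Definition w (H : R -> R -> R -> R) (u0 : R -> R) (Theta eps : R) (x t : R) : R :=
  u0 x - eps * rho H u0 x * exp (- Theta * t).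

Definition HJop (H : R -> R -> R -> R) (W : R -> R -> R) (x t : R) : R :=
  Derive (fun s => W x s) t + H x (Derive (fun y => W y t) x) (W x t).

(* Main.v *)
Require Import Defs.
From Stdlib Require Import Reals Lra Lia ZArith Classical.
From Coquelicot Require Import Coquelicot.
Open Scope R_scope.

Lemma ballR (x y e : R) : ball x e y <-> Rabs (y - x) < e.
Proof. split; intro H; exact H. Qed.

Lemma ball3 (a b c a' b' c' e : R) :
  Rabs (a' - a) < e -> Rabs (b' - b) < e -> Rabs (c' - c) < e ->
  @ball (prod_UniformSpace (prod_UniformSpace R_UniformSpace R_UniformSpace) R_UniformSpace) (a,b,c) e (a',b',c').
Proof. intros. split; [split|]; assumption. Qed.

Lemma cont_pair {U V W : UniformSpace} (f : U -> V) (g : U -> W) x :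
  continuous f x -> continuous g x -> continuous (fun y => (f y, g y)) x.
Proof.
  intros Hf Hg. apply (continuous_comp_2 f g (fun a b => (a,b))); auto.
  apply continuous_ext with (f := fun z => z). intros [a b]; reflexivity.
  apply continuous_id.
Qed.

Lemma per_ext (Q : R -> Prop) : (forall x, Q x -> Q (x+1)) -> (forall x, Q (x+1) -> Q x) ->
  (forall x, 0 <= x <= 1 -> Q x) -> forall x, Q x.
Proof.
  intros H1 H2 H0.
  assert (Hn : forall n : nat, forall y, 0 <= y <= 1 -> Q (y + INR n) /\ Q (y - INR n)).
  { induction n; intros y Hy.
    - simpl. replace (y + 0) with y by ring. replace (y - 0) with y by ring. auto.
    - destruct (IHn y Hy) as [A B]. rewrite S_INR. split.
      + replace (y + (INR n + 1)) with ((y + INR n) + 1) by ring. auto.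
      + apply H2. replace (y - (INR n + 1) + 1) with (y - INR n) by ring. auto. }
  intros x. destruct (archimed x) as [Ha Hb].
  set (k := (up x - 1)%Z).
  assert (Hy : 0 <= x - IZR k <= 1).
  { unfold k. rewrite minus_IZR. simpl. lra. }
  destruct (Z_le_gt_dec 0 k) as [Hk|Hk].
  - assert (E : IZR k = INR (Z.to_nat k)).
    { rewrite INR_IZR_INZ. rewrite Z2Nat.id; auto. }
    destruct (Hn (Z.to_nat k) _ Hy) as [A _]. rewrite <- E in A.
    replace x with (x - IZR k + IZR k) by ring. exact A.
  - assert (E : IZR k = - INR (Z.to_nat (- k))).
    { rewrite INR_IZR_INZ. rewrite Z2Nat.id by lia. rewrite opp_IZR. ring. }
    destruct (Hn (Z.to_nat (-k)) _ Hy) as [_ A].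
    replace x with (x - IZR k - INR (Z.to_nat (-k))). exact A. rewrite E. ring.
Qed.

Lemma cont_pt (f : R -> R) x : continuous f x -> continuity_pt f x.
Proof. intro H. apply continuity_pt_filterlim. exact H. Qed.

Lemma per_bounded (f : R -> R) : (forall x, f (x+1) = f x) -> (forall x, continuous f x) ->
  exists M, 0 <= M /\ forall x, Rabs (f x) <= M.
Proof.
  intros Hp Hc.
  destruct (continuity_ab_maj (fun x => Rabs (f x)) 0 1) as [m [Hm _]].
  lra. intros c _. apply cont_pt. apply continuous_Rabs_comp. auto.
  exists (Rabs (f m)). split. apply Rabs_pos.
  apply per_ext. intros x H. rewrite Hp. auto. intros x H. rewrite Hp in H. auto.
  exact Hm.
Qed.

Lemma minmax_abs a b c : Rmin a b <= c <= Rmax a b -> Rabs (c - a) <= Rabs (b - a).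
Proof.
  unfold Rmin, Rmax. destruct (Rle_dec a b); intros [H1 H2];
  unfold Rabs; repeat destruct Rcase_abs; lra.
Qed.
Lemma tri (a b c : R) : Rabs (a - c) <= Rabs (a - b) + Rabs (b - c).
Proof. replace (a - c) with ((a - b) + (b - c)) by ring. apply Rabs_triang. Qed.

Lemma unif (F : R -> R -> R -> R) (P U : R -> R) :
 (forall x p u, continuous (fun z : R * R * R => F (fst (fst z)) (snd (fst z)) (snd z)) (x,p,u)) ->
 (forall x, continuous P x) -> (forall x, continuous U x) ->
 forall c, 0 < c -> exists d, 0 < d /\ forall x, 0 <= x <= 1 -> forall p u,
   Rabs (p - P x) < d -> Rabs (u - U x) < d -> Rabs (F x p u - F x (P x) (U x)) < c.
Proof.
  intros HF HP HU c Hc.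
  assert (Hc2 : 0 < c / 2) by lra.
  assert (Hr : forall t, {r : posreal | forall z : R * R * R, ball (t, P t, U t) r z ->
     Rabs (F (fst (fst z)) (snd (fst z)) (snd z) - F t (P t) (U t)) < c/2}).
  { intro t. apply locally_ex_dec. intros; apply classic.
    pose proof (proj1 (filterlim_locally _ _) (HF t (P t) (U t)) (mkposreal _ Hc2)) as H.
    eapply filter_imp; [|exact H]. intros z Hz. exact Hz. }
  pose (r := fun t => proj1_sig (Hr t)).
  assert (Hs : forall t, {s : posreal | forall y : R, ball t s y ->
     Rabs (P y - P t) < r t / 2 /\ Rabs (U y - U t) < r t / 2}).
  { intro t. apply locally_ex_dec. intros; apply classic.
    assert (Hrt : 0 < r t / 2) by (pose proof (cond_pos (r t)); lra).
    pose proof (proj1 (filterlim_locally _ _) (HP t) (mkposreal _ Hrt)) as H1.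
    pose proof (proj1 (filterlim_locally _ _) (HU t) (mkposreal _ Hrt)) as H2.
    eapply filter_imp; [|exact (filter_and _ _ H1 H2)]. intros z [Hz1 Hz2]. split; assumption. }
  pose (s := fun t => proj1_sig (Hs t)).
  assert (Hdp : forall t, 0 < Rmin (r t / 2) (s t)).
  { intro t. apply Rmin_pos. pose proof (cond_pos (r t)); lra. apply cond_pos. }
  pose (delta := fun t => mkposreal _ (Hdp t)).
  destruct (compactness_value_1d 0 1 delta) as [d Hd].
  exists d. split. apply cond_pos.
  intros x Hx p u Hp Hu. apply NNPP. intro Hn. apply (Hd x Hx). intros [t [Ht [Hxt Hdt]]].
  apply Hn. simpl in Hxt, Hdt.
  pose proof (Rmin_l (r t / 2) (s t)). pose proof (Rmin_r (r t / 2) (s t)).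
  pose proof (cond_pos (r t)).
  destruct (proj2_sig (Hs t) x) as [K1 K2]. apply ballR. fold (s t). lra.
  fold (r t) in K1, K2.
  assert (Hb : forall p' u', Rabs (p' - P x) < d -> Rabs (u' - U x) < d ->
     Rabs (F x p' u' - F t (P t) (U t)) < c / 2).
  { intros p' u' Hp' Hu'.
    apply (proj2_sig (Hr t) (x, p', u')). fold (r t).
    apply ball3. lra.
    pose proof (tri p' (P x) (P t)). lra.
    pose proof (tri u' (U x) (U t)). lra. }
  pose proof (Hb p u Hp Hu) as B1.
  assert (Rabs (P x - P x) < d /\ Rabs (U x - U x) < d) as [Q1 Q2].
  { unfold Rminus; rewrite !Rplus_opp_r, Rabs_R0. split; apply cond_pos. }
  pose proof (Hb _ _ Q1 Q2) as B2. rewrite Rabs_minus_sym in B2.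
  pose proof (tri (F x p u) (F t (P t) (U t)) (F x (P x) (U x))). lra.
Qed.

Lemma unif_per (F : R -> R -> R -> R) (P U : R -> R) :
 (forall x p u, continuous (fun z : R * R * R => F (fst (fst z)) (snd (fst z)) (snd z)) (x,p,u)) ->
 (forall x, continuous P x) -> (forall x, continuous U x) ->
 (forall x p u, F (x+1) p u = F x p u) -> (forall x, P (x+1) = P x) -> (forall x, U (x+1) = U x) ->
 forall c, 0 < c -> exists d, 0 < d /\ forall x p u,
   Rabs (p - P x) < d -> Rabs (u - U x) < d -> Rabs (F x p u - F x (P x) (U x)) <= c.
Proof.
  intros HF HP HU PF PP PU c Hc.
  destruct (unif F P U HF HP HU c Hc) as [d [Hd Hd']].
  exists d. split; auto.
  apply (per_ext (fun x => forall p u, Rabs (p - P x) < d -> Rabs (u - U x) < d -> Rabs (F x p u - F x (P x) (U x)) <= c)).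
  - intros x Hx p u. rewrite !PF, PP, PU. auto.
  - intros x Hx p u. specialize (Hx p u). rewrite !PF, PP, PU in Hx. auto.
  - intros x Hx p u Hp Hu. left. auto.
Qed.

Lemma cmul (f g : R -> R) x : continuous f x -> continuous g x -> continuous (fun y => f y * g y) x.
Proof. exact (continuous_mult f g x). Qed.
Lemma cminus (f g : R -> R) x : continuous f x -> continuous g x -> continuous (fun y => f y - g y) x.
Proof. exact (continuous_minus f g x). Qed.

Lemma deriv_per (f : R -> R) : (forall x, f (x+1) = f x) -> forall x, Derive f (x+1) = Derive f x.
Proof.
  intros Hp x. pose proof (Derive_n_comp_trans f 1 x 1) as E. simpl in E.
  change (Derive (fun x => f x) (x + 1) = Derive f x). rewrite <- E. apply Derive_ext. intro; apply Hp.
Qed.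

Lemma mvt (f : R -> R) a b : (forall y, ex_derive f y) ->
  exists c, Rabs (c - a) <= Rabs (b - a) /\ f b - f a = Derive f c * (b - a).
Proof.
  intro Hd. destruct (MVT_gen f a b (Derive f)) as [c [Hc E]].
  - intros; apply Derive_correct; auto.
  - intros; apply cont_pt. apply (@ex_derive_continuous R_AbsRing R_NormedModule). auto.
  - exists c. split; auto. apply minmax_abs; auto.
Qed.

Lemma exp_le1 y : y <= 0 -> exp y <= 1.
Proof. intro H. destruct H as [H|H]. left. rewrite <- exp_0. apply exp_increasing; auto.
  subst. rewrite exp_0. lra. Qed.

Theorem lemma2p5 (H : R -> R -> R -> R) (u0 : R -> R) (kappa : R) :
  smooth3 H ->
  (forall x p u, H (x + 1) p u = H x p u) ->
  (forall x p u, Dp (Dp H) x p u > 0) ->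
  superlinear_p H ->
  0 < kappa ->
  (forall x p u, Rabs (Du H x p u) <= kappa) ->
  viscosity_solution H u0 ->
  (forall x, ex_derive u0 x -> Dp H x (Derive u0 x) (u0 x) <> 0) ->
  (* known regularity result quoted in the paper's context *)
  smooth1 u0 ->
  mu H u0 > 0 ->
  forall Theta : R, mu H u0 < Theta ->
  exists eps0 : R, 0 < eps0 /\
    (forall eps, 0 < eps <= eps0 ->
       forall x t, 0 <= t -> HJop H (w H u0 Theta eps) x t >= 0) /\
    (forall eps, - eps0 <= eps < 0 ->
       forall x t, 0 <= t -> HJop H (w H u0 Theta eps) x t <= 0).
Proof.
  intros HS Hper _ _ _ _ Hvisc Hnz Hsm Hmu Theta HT.
  destruct Hvisc as [Hpu [Hcu [Hvsub Hvsup]]].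
  assert (Hu0d : forall x, ex_derive u0 x) by (intro x; exact (Hsm 0%nat x)).
  assert (Hp0d : forall x, ex_derive (Derive u0) x) by (intro x; exact (Hsm 1%nat x)).
  assert (Hcp0 : forall x, continuous (Derive u0) x) by (intro; apply (@ex_derive_continuous R_AbsRing R_NormedModule); auto).
  assert (Hcu0 : forall x, continuous u0 x) by (intro; apply (@ex_derive_continuous R_AbsRing R_NormedModule); auto).
  assert (Hpp0 : forall x, Derive u0 (x+1) = Derive u0 x) by (apply deriv_per; exact Hpu).
  assert (HH0 : forall x, H x (Derive u0 x) (u0 x) = 0).
  { intro x. assert (HC : Defs.C1 u0) by (split; auto).
    assert (Hl1 : loc_max (fun y => u0 y - u0 y) x) by (exists 1; split; [lra|intros; lra]).
    assert (Hl2 : loc_min (fun y => u0 y - u0 y) x) by (exists 1; split; [lra|intros; lra]).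
    pose proof (Hvsub u0 x HC Hl1). pose proof (Hvsup u0 x HC Hl2). lra. }
  assert (HB0 : forall x, Bfun H u0 x <> 0) by (intro x; apply Hnz; auto).
  assert (HDpper : forall x p u, Dp H (x+1) p u = Dp H x p u).
  { intros; unfold Dp; apply Derive_ext; intros; apply Hper. }
  assert (HDuper : forall x p u, Du H (x+1) p u = Du H x p u).
  { intros; unfold Du; apply Derive_ext; intros; apply Hper. }
  assert (HcDp : forall x p u, continuous (fun z : R * R * R => Dp H (fst (fst z)) (snd (fst z)) (snd z)) (x,p,u)).
  { intros. exact (proj2 (HS (1%nat :: nil)%list) x p u). }
  assert (HcDu : forall x p u, continuous (fun z : R * R * R => Du H (fst (fst z)) (snd (fst z)) (snd z)) (x,p,u)).
  { intros. exact (proj2 (HS (2%nat :: nil)%list) x p u). }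
  assert (Hcurve : forall x, continuous (fun y => (y, Derive u0 y, u0 y)) x).
  { intro x. apply cont_pair. apply cont_pair. apply continuous_id. auto. auto. }
  assert (HcB : forall x, continuous (Bfun H u0) x).
  { intro x. apply (continuous_comp (fun y => (y, Derive u0 y, u0 y))
       (fun z : R * R * R => Dp H (fst (fst z)) (snd (fst z)) (snd z))). auto. apply HcDp. }
  assert (HcHu : forall x, continuous (Hufun H u0) x).
  { intro x. apply (continuous_comp (fun y => (y, Derive u0 y, u0 y))
       (fun z : R * R * R => Du H (fst (fst z)) (snd (fst z)) (snd z))). auto. apply HcDu. }
  assert (HBper : forall x, Bfun H u0 (x+1) = Bfun H u0 x).
  { intro; unfold Bfun. rewrite Hpp0, Hpu. apply HDpper. }
  assert (HHuper : forall x, Hufun H u0 (x+1) = Hufun H u0 x).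
  { intro; unfold Hufun. rewrite Hpp0, Hpu. apply HDuper. }
  set (m := mu H u0) in *.
  set (g := fun t => (m - Hufun H u0 t) / Bfun H u0 t).
  assert (Hcg : forall x, continuous g x).
  { intro x. unfold g, Rdiv. apply cmul. apply cminus. apply continuous_const. auto.
    apply continuous_Rinv_comp; auto. }
  assert (Hgper : forall x, g (x+1) = g x) by (intro; unfold g; rewrite HBper, HHuper; auto).
  assert (Hexg : forall a b, ex_RInt g a b) by (intros; apply (@ex_RInt_continuous R_CompleteNormedModule); intros; auto).
  assert (Hg01 : RInt g 0 1 = 0).
  { assert (HexB : ex_RInt (fun t => / Bfun H u0 t) 0 1).
    { apply (@ex_RInt_continuous R_CompleteNormedModule); intros. apply continuous_Rinv_comp; auto. }
    assert (HexHB : ex_RInt (fun t => Hufun H u0 t / Bfun H u0 t) 0 1).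
    { apply (@ex_RInt_continuous R_CompleteNormedModule); intros. unfold Rdiv. apply cmul; auto.
      apply continuous_Rinv_comp; auto. }
    assert (Hex1 : ex_RInt (fun t => m * / Bfun H u0 t) 0 1).
    { exact (ex_RInt_scal (V:=R_CompleteNormedModule) _ 0 1 m HexB). }
    assert (E2 : RInt (fun t => m * / Bfun H u0 t) 0 1 = m * RInt (fun t => / Bfun H u0 t) 0 1).
    { exact (RInt_scal (V:=R_CompleteNormedModule) _ 0 1 m HexB). }
    assert (E : RInt g 0 1 = RInt (fun t => m * / Bfun H u0 t) 0 1 - RInt (fun t => Hufun H u0 t / Bfun H u0 t) 0 1).
    { transitivity (RInt (fun t => minus (m * / Bfun H u0 t) (Hufun H u0 t / Bfun H u0 t)) 0 1).
      apply RInt_ext. intros t _. change ((m - Hufun H u0 t) / Bfun H u0 t = m * / Bfun H u0 t - Hufun H u0 t / Bfun H u0 t). field. auto.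
      exact (RInt_minus (V:=R_CompleteNormedModule) _ _ 0 1 Hex1 HexHB). }
    rewrite E, E2.
    assert (HI : RInt (fun t => / Bfun H u0 t) 0 1 <> 0).
    { intro HI. unfold m, mu in Hmu. rewrite HI, Rdiv_0_r in Hmu. lra. }
    unfold m at 1, mu. match goal with |- ?a = ?b => change (@eq R a b) end. field. exact HI. }
  set (rh := rho H u0).
  assert (Hrd : forall x, is_derive rh x (rh x * g x)).
  { intro x. change rh with (fun x => exp (RInt g 0 x)).
    assert (Hd1 : is_derive (fun y => RInt g 0 y) x (g x)).
    { apply (is_derive_RInt g (RInt g 0) 0 x). apply filter_forall. intros; apply (@RInt_correct R_CompleteNormedModule); auto. auto. }
    pose proof (is_derive_comp exp (fun y => RInt g 0 y) x _ _ (is_derive_exp _) Hd1) as Hd2.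
    change (is_derive (fun x => exp (RInt g 0 x)) x (exp (RInt g 0 x) * g x)).
    rewrite Rmult_comm. exact Hd2. }
  assert (Hrper : forall x, rh (x+1) = rh x).
  { intro x. change (exp (RInt g 0 (x+1)) = exp (RInt g 0 x)). f_equal.
    assert (C : plus (RInt g 0 1) (RInt g 1 (x+1)) = RInt g 0 (x+1)) by exact (RInt_Chasles (V:=R_CompleteNormedModule) g 0 1 (x+1) (Hexg 0 1) (Hexg 1 (x+1))).
    assert (L : RInt (fun y => scal 1 (g (1 * y + 1))) 0 x = RInt g (1 * 0 + 1) (1 * x + 1))
      by exact (RInt_comp_lin (V:=R_CompleteNormedModule) g 1 1 0 x (Hexg _ _)).
    assert (L' : RInt g 1 (x+1) = RInt (fun y => scal 1 (g (1 * y + 1))) 0 x).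
    { rewrite L. f_equal; ring. }
    transitivity (RInt g 0 1 + RInt g 1 (x+1)). { symmetry. exact C. }
    rewrite Hg01, Rplus_0_l, L'. apply RInt_ext. intros y _.
    change (1 * g (1 * y + 1) = g y). rewrite !Rmult_1_l, Hgper. reflexivity. }
  assert (Hrpos : forall x, 0 < rh x) by (intro; apply exp_pos).
  destruct (per_bounded rh Hrper) as [A0 [HA0 HA]].
  { intro x. apply (@ex_derive_continuous R_AbsRing R_NormedModule). eexists; apply Hrd. }
  destruct (per_bounded g Hgper Hcg) as [G [HG0 HG]].
  set (A := A0 + 1).
  assert (HAp : 0 < A) by (unfold A; lra).
  assert (HA' : forall x, rh x <= A).
  { intro x. pose proof (HA x). pose proof (Hrpos x). rewrite Rabs_pos_eq in H0 by lra. unfold A; lra. }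
  set (c := (Theta - m) / (G + 1)).
  assert (Hc : 0 < c) by (unfold c; apply Rdiv_lt_0_compat; lra).
  destruct (unif_per (Dp H) (Derive u0) u0 HcDp Hcp0 Hcu0 HDpper Hpp0 Hpu c Hc) as [d1 [Hd1 Hu1]].
  destruct (unif_per (Du H) (Derive u0) u0 HcDu Hcp0 Hcu0 HDuper Hpp0 Hpu c Hc) as [d2 [Hd2 Hu2]].
  set (d := Rmin d1 d2).
  assert (Hd : 0 < d) by (apply Rmin_pos; auto).
  pose proof (Rmin_l d1 d2). pose proof (Rmin_r d1 d2). fold d in H0, H1.
  set (eps0 := d / (2 * A * (G + 1))).
  assert (He0 : 0 < eps0) by (unfold eps0; apply Rdiv_lt_0_compat; [auto | apply Rmult_lt_0_compat; lra]).
  assert (He0d : eps0 * A * (G + 1) = d / 2) by (unfold eps0; field; lra).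
  assert (Claim : forall eps, Rabs eps <= eps0 -> forall x t, 0 <= t ->
     exists K, 0 <= K /\ HJop H (w H u0 Theta eps) x t = eps * K).
  { intros eps Heps x t Ht.
    set (e := exp (- Theta * t)).
    assert (He : 0 < e <= 1). { split. apply exp_pos. apply exp_le1. nra. }
    assert (Ht1 : Derive (fun s => w H u0 Theta eps x s) t = eps * rh x * Theta * e).
    { apply is_derive_unique. unfold w. fold rh. auto_derive. exact I. unfold e; ring. }
    assert (Hx1 : Derive (fun y => w H u0 Theta eps y t) x = Derive u0 x - eps * e * (rh x * g x)).
    { apply is_derive_unique. unfold w. fold rh. auto_derive.
      split. apply Hu0d. split. eexists; apply Hrd. exact I.
      change (Derive (fun x0 => rh x0) x) with (Derive rh x).
      change (Derive (fun x0 => u0 x0) x) with (Derive u0 x).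
      rewrite (is_derive_unique rh x _ (Hrd x)). unfold e; ring. }
    unfold HJop. rewrite Ht1, Hx1.
    set (dl := eps * e).
    set (q := Derive u0 x - dl * (rh x * g x)).
    set (v := u0 x - dl * rh x).
    assert (Ev : w H u0 Theta eps x t = v) by (unfold w, v, dl; fold rh; fold e; ring).
    rewrite Ev.
    replace (Derive u0 x - eps * e * (rh x * g x)) with q by (unfold q, dl; ring).
    destruct (mvt (fun y => H x y (u0 x)) (Derive u0 x) q) as [xi [Hxi Exi]].
    { intro y. exact (proj1 (proj2 (proj1 (HS nil) x y (u0 x)))). }
    destruct (mvt (fun y => H x q y) (u0 x) v) as [eta [Heta Eeta]].
    { intro y. exact (proj2 (proj2 (proj1 (HS nil) x q y))). }
    change (Derive (fun y => H x y (u0 x)) xi) with (Dp H x xi (u0 x)) in Exi.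
    change (Derive (fun y => H x q y) eta) with (Du H x q eta) in Eeta.
    pose proof (HH0 x) as H0x.
    assert (Hdl : Rabs dl <= eps0).
    { unfold dl. rewrite Rabs_mult, (Rabs_pos_eq e) by lra.
      apply Rle_trans with (Rabs eps * 1). apply Rmult_le_compat_l. apply Rabs_pos. lra. lra. }
    pose proof (Hrpos x) as Hrx. pose proof (HA' x) as HAx. pose proof (HG x) as HGx.
    pose proof (Rabs_pos (g x)) as Hgp. pose proof (Rabs_pos dl) as Hdlp.
    assert (Hq : Rabs (q - Derive u0 x) < d).
    { replace (q - Derive u0 x) with (- (dl * (rh x * g x))) by (unfold q; ring).
      rewrite Rabs_Ropp, !Rabs_mult, (Rabs_pos_eq (rh x)) by lra.
      assert (rh x * Rabs (g x) <= A * G) by (apply Rmult_le_compat; lra).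
      assert (Rabs dl * (rh x * Rabs (g x)) <= eps0 * (A * G)) by (apply Rmult_le_compat; nra).
      assert (eps0 * (A * G) <= eps0 * A * (G + 1)) by nra. lra. }
    assert (Hv : Rabs (v - u0 x) < d).
    { replace (v - u0 x) with (- (dl * rh x)) by (unfold v; ring).
      rewrite Rabs_Ropp, !Rabs_mult, (Rabs_pos_eq (rh x)) by lra.
      assert (Rabs dl * rh x <= eps0 * A) by (apply Rmult_le_compat; lra).
      assert (eps0 * A <= eps0 * A * (G + 1)) by nra. lra. }
    assert (Hz1 : Rabs (u0 x - u0 x) < d1) by (rewrite Rminus_diag, Rabs_R0; lra).
    pose proof (Hu1 x xi (u0 x) ltac:(lra) Hz1) as He2.
    pose proof (Hu2 x q eta ltac:(lra) ltac:(lra)) as He1.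
    change (Dp H x (Derive u0 x) (u0 x)) with (Bfun H u0 x) in He2.
    change (Du H x (Derive u0 x) (u0 x)) with (Hufun H u0 x) in He1.
    set (e1 := Du H x q eta - Hufun H u0 x) in *.
    set (e2 := Dp H x xi (u0 x) - Bfun H u0 x) in *.
    assert (HgB : g x * Bfun H u0 x = m - Hufun H u0 x) by (unfold g; field; auto).
    exists (e * rh x * (Theta - m - e1 - g x * e2)). split.
    { apply Rmult_le_pos. nra.
      assert (Hge : Rabs (g x * e2) <= G * c) by (rewrite Rabs_mult; apply Rmult_le_compat; auto using Rabs_pos).
      assert (c * (G + 1) = Theta - m) by (unfold c; field; lra).
      pose proof (Rle_abs e1). pose proof (Rle_abs (g x * e2)). nra. }
    replace (H x q v) with (Du H x q eta * (v - u0 x) + Dp H x xi (u0 x) * (q - Derive u0 x)) by lra.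
    replace (Du H x q eta) with (Hufun H u0 x + e1) by (unfold e1; ring).
    replace (Dp H x xi (u0 x)) with (Bfun H u0 x + e2) by (unfold e2; ring).
    replace m with (g x * Bfun H u0 x + Hufun H u0 x) by lra.
    unfold q, v, dl. ring. }
  exists eps0. split; auto. split.
  - intros eps Heps x t Ht. destruct (Claim eps) with (x := x) (t := t) as [K [HK E]]; auto.
    rewrite Rabs_pos_eq; lra. rewrite E. apply Rle_ge, Rmult_le_pos; lra.
  - intros eps Heps x t Ht. destruct (Claim eps) with (x := x) (t := t) as [K [HK E]]; auto.
    rewrite Rabs_left; lra. rewrite E. apply Rmult_le_0_r; lra.
Qed.
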